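(* Let $M$ be a monoid, let $b_0,\dots,b_l,a,h\in M$ with $a$ and $h$ invertible, and suppose that $a^{-s}ha^s$ commutes with every $b_i$ for all $s\in\mathbb{Z}$. For integers $n_1,\dots,n_l$ put $u(t)=b_0t^{n_1}b_1t^{n_2}\cdots t^{n_l}b_l$ and $k=\sum_i n_i$. Then $$u(ah)=\begin{cases}\big(\prod_{j=1}^{k}a^{j}ha^{-j}\big)\,u(a) & \text{if } k>0,\\ \big(\prod_{j=0}^{-1-k}a^{-j}h^{-1}a^{j}\big)\,u(a) & \text{if } k<0,\\ u(a) & \text{if } k=0,\end{cases}$$ where the products are taken in increasing order of $j$. *)

(* Defs.v *)
From Stdlib Require Import ZArith List.
Import ListNotations.

Record monoid := Monoid {
  carrier :> Type;
  mul : carrier -> carrier -> carrier;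
  one : carrier;
  mulA : forall x y z, mul x (mul y z) = mul (mul x y) z;
  mul1x : forall x, mul one x = x;
  mulx1 : forall x, mul x one = x
}.
Arguments mul {m} _ _.
Arguments one {m}.

Definition is_inverse {M : monoid} (x x' : M) : Prop :=
  mul x x' = one /\ mul x' x = one.

Definition npow {M : monoid} (x : M) (n : nat) : M := Nat.iter n (mul x) one.

Definition zpow {M : monoid} (x x' : M) (n : Z) : M :=
  match n with
  | Z0 => one
  | Zpos p => npow x (Pos.to_nat p)
  | Zneg p => npow x' (Pos.to_nat p)
  end.

Definition oprod {M : monoid} (f : nat -> M) (s : list nat) : M :=
  fold_right (fun i acc => mul (f i) acc) one s.

(* u(t) = b_0 t^{n_1} b_1 t^{n_2} ... t^{n_l} b_l, for t invertible with inverse t' *)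
Definition word {M : monoid} (b : nat -> M) (n : nat -> Z) (l : nat) (t t' : M) : M :=
  mul (b 0%nat) (oprod (fun i => mul (zpow t t' (n i)) (b i)) (seq 1 l)).

Definition total_exp (n : nat -> Z) (l : nat) : Z :=
  fold_right Z.add 0%Z (map n (seq 1 l)).

(* Main.v *)
Require Import Defs.
From Stdlib Require Import ZArith List Lia.
Import ListNotations.
Open Scope Z_scope.

Section Pow.
Variable M : monoid.

Lemma canc (z x y : M) : mul x y = one -> mul (mul z x) y = z.
Proof. intros H. rewrite <- mulA, H, mulx1. reflexivity. Qed.

Lemma npow_succ_r (x : M) m : npow x (S m) = mul (npow x m) x.
Proof.
  unfold npow. induction m; simpl in *.
  - rewrite mulx1, mul1x. reflexivity.
  - rewrite IHm at 1. rewrite mulA. reflexivity.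
Qed.

Variables (x x' : M).
Hypothesis H : is_inverse x x'.

Lemma zpow_succ z : zpow x x' (z + 1) = mul (zpow x x' z) x.
Proof.
  destruct z as [|p|p].
  - cbn. unfold npow; simpl. rewrite mulx1, mul1x. reflexivity.
  - replace (Z.pos p + 1) with (Z.pos (Pos.succ p)) by lia. cbn [zpow].
    rewrite Pos2Nat.inj_succ, npow_succ_r. reflexivity.
  - destruct (Pos.succ_pred_or p) as [->|Hp].
    + cbn. unfold npow; simpl. rewrite mulx1. destruct H; auto.
    + rewrite <- Hp. replace (Z.neg (Pos.succ (Pos.pred p)) + 1) with (Z.neg (Pos.pred p)) by lia.
      cbn [zpow]. rewrite Pos2Nat.inj_succ, npow_succ_r, <- mulA.
      destruct H as [H1 H2]; rewrite H2, mulx1; auto.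
Qed.

Lemma zpow_pred z : zpow x x' (z - 1) = mul (zpow x x' z) x'.
Proof.
  pose proof (zpow_succ (z - 1)) as E. replace (z - 1 + 1) with z in E by lia.
  rewrite E, <- mulA. destruct H as [H1 _]; rewrite H1, mulx1. reflexivity.
Qed.

Lemma zpow_add m n : zpow x x' (m + n) = mul (zpow x x' m) (zpow x x' n).
Proof.
  induction n using Z.peano_ind.
  - rewrite Z.add_0_r; cbn; rewrite mulx1; auto.
  - rewrite <- Z.add_1_r, Z.add_assoc, !zpow_succ, IHn, mulA; auto.
  - rewrite <- Z.sub_1_r, Z.add_sub_assoc, !zpow_pred, IHn, mulA; auto.
Qed.

Lemma zinv z : mul (zpow x x' z) (zpow x x' (- z)) = one.
Proof. rewrite <- zpow_add, Z.add_opp_diag_r. reflexivity. Qed.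
Lemma zinvl z : mul (zpow x x' (- z)) (zpow x x' z) = one.
Proof. rewrite <- zpow_add, Z.add_opp_diag_l. reflexivity. Qed.
End Pow.
Arguments canc {M} z {x y}.
Arguments zpow_succ {M x x'} H z.
Arguments zpow_pred {M x x'} H z.
Arguments zpow_add {M x x'} H m n.
Arguments zinv {M x x'} H z.
Arguments zinvl {M x x'} H z.

Section Main.
Variables (M : monoid) (l : nat) (b : nat -> M) (n : nat -> Z) (a a' h h' : M).
Hypotheses (Ha : is_inverse a a') (Hh : is_inverse h h').
Hypothesis Hcomm : forall (s : Z) (i : nat), (i <= l)%nat ->
     mul (mul (mul (zpow a a' (- s)) h) (zpow a a' s)) (b i)
     = mul (b i) (mul (mul (zpow a a' (- s)) h) (zpow a a' s)).

Local Notation P := (zpow a a').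

Definition good (y : M) := forall m i, (i <= l)%nat ->
  mul (mul (mul (P m) y) (P (- m))) (b i) = mul (b i) (mul (mul (P m) y) (P (- m))).

Lemma conjP m s y : mul (mul (P m) (mul (mul (P s) y) (P (- s)))) (P (- m))
  = mul (mul (P (m + s)) y) (P (- (m + s))).
Proof.
  replace (- (m + s)) with (- s + - m) by lia.
  rewrite !(zpow_add Ha), !mulA. reflexivity.
Qed.

Lemma good_conj s y : good y -> good (mul (mul (P s) y) (P (- s))).
Proof. intros G m i Hi. rewrite conjP. apply G; auto. Qed.

Lemma good_conj' s y : good y -> good (mul (mul (P (- s)) y) (P s)).
Proof. intros G. pose proof (good_conj (- s) y G) as G'. rewrite Z.opp_involutive in G'. exact G'. Qed.

Lemma good_one : good one.
Proof. intros m i Hi. rewrite mulx1, (zinv Ha), mul1x, mulx1. reflexivity. Qed.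

Lemma good_mul x y : good x -> good y -> good (mul x y).
Proof.
  intros Gx Gy m i Hi.
  assert (E : mul (mul (P m) (mul x y)) (P (- m)) =
              mul (mul (mul (P m) x) (P (- m))) (mul (mul (P m) y) (P (- m)))).
  { rewrite !mulA. rewrite (canc _ (zinvl Ha m)). reflexivity. }
  rewrite E.
  set (X := mul (mul (P m) x) (P (- m))) in *.
  set (Y := mul (mul (P m) y) (P (- m))) in *.
  specialize (Gx m i Hi). specialize (Gy m i Hi). fold X in Gx. fold Y in Gy.
  rewrite <- mulA, Gy, mulA, Gx, mulA. reflexivity.
Qed.

Lemma good_oprod f s : (forall j, good (f j)) -> good (oprod f s).
Proof.
  intros G. induction s; simpl.
  - apply good_one.
  - apply good_mul; auto.
Qed.

Lemma good_h : good h.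
Proof.
  intros m i Hi. pose proof (Hcomm (- m) i Hi) as E.
  rewrite Z.opp_involutive in E. exact E.
Qed.

Lemma inv_comm c c' (d : M) : mul c c' = one -> mul c' c = one -> mul c d = mul d c ->
  mul c' d = mul d c'.
Proof.
  intros H1 H2 H3.
  transitivity (mul (mul c' d) (mul c c')). { rewrite H1, mulx1; auto. }
  rewrite !mulA. rewrite <- (mulA _ c' d c), <- H3, mulA, H2, mul1x. reflexivity.
Qed.

Lemma good_h' : good h'.
Proof.
  intros m i Hi. destruct Hh as [H1 H2].
  apply (inv_comm (mul (mul (P m) h) (P (- m)))).
  - rewrite !mulA. rewrite (canc _ (zinvl Ha m)), (canc _ H1), (zinv Ha m). reflexivity.
  - rewrite !mulA. rewrite (canc _ (zinvl Ha m)), (canc _ H2), (zinv Ha m). reflexivity.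
  - apply good_h; auto.
Qed.

Definition Dfun (k : Z) : M :=
  if (0 <? k)%Z then
     oprod (fun j => mul (mul (zpow a a' (Z.of_nat j)) h) (zpow a a' (- Z.of_nat j)))
                (seq 1 (Z.to_nat k))
   else if (k <? 0)%Z then
     oprod (fun j => mul (mul (zpow a a' (- Z.of_nat j)) h') (zpow a a' (Z.of_nat j)))
                (seq 0 (Z.to_nat (- k)))
   else one.

Lemma good_D k : good (Dfun k).
Proof.
  unfold Dfun. destruct (0 <? k); [|destruct (k <? 0)]; try apply good_one;
  apply good_oprod; intros j.
  - apply good_conj, good_h.
  - apply good_conj', good_h'.
Qed.

Lemma oprod_app (f : nat -> M) s1 s2 : oprod f (s1 ++ s2) = mul (oprod f s1) (oprod f s2).
Proof.
  induction s1; simpl. - rewrite mul1x; auto. - rewrite IHs1, mulA; auto.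
Qed.

Lemma D_pos m : Dfun (Z.of_nat m) = oprod (fun j => mul (mul (P (Z.of_nat j)) h) (P (- Z.of_nat j))) (seq 1 m).
Proof.
  destruct m. - reflexivity.
  - unfold Dfun. rewrite (proj2 (Z.ltb_lt _ _)) by lia. rewrite Nat2Z.id. reflexivity.
Qed.

Lemma D_neg m : Dfun (- Z.of_nat m) = oprod (fun j => mul (mul (P (- Z.of_nat j)) h') (P (Z.of_nat j))) (seq 0 m).
Proof.
  destruct m. - reflexivity.
  - unfold Dfun. rewrite (proj2 (Z.ltb_ge _ _)) by lia. rewrite (proj2 (Z.ltb_lt _ _)) by lia.
    rewrite Z.opp_involutive, Nat2Z.id. reflexivity.
Qed.

Lemma D_succ z : Dfun (z + 1) = mul (Dfun z) (mul (mul (P (z + 1)) h) (P (- (z + 1)))).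
Proof.
  destruct (Z_le_gt_dec 0 z).
  - rewrite <- (Z2Nat.id z) by lia. set (m := Z.to_nat z).
    replace (Z.of_nat m + 1) with (Z.of_nat (S m)) by lia.
    rewrite !D_pos, seq_S, oprod_app. simpl. rewrite mulx1. reflexivity.
  - assert (E : z = - Z.of_nat (S (Z.to_nat (- z - 1)))) by lia.
    rewrite E. set (m := Z.to_nat (- z - 1)).
    replace (- Z.of_nat (S m) + 1) with (- Z.of_nat m) by lia.
    rewrite !D_neg, seq_S, oprod_app. simpl. rewrite mulx1, Z.opp_involutive.
    rewrite <- mulA. rewrite !mulA. rewrite (canc _ (zinv Ha _)).
    destruct Hh as [_ H2]. rewrite (canc _ H2), (canc _ (zinvl Ha _)). reflexivity.
Qed.

Lemma Hah : is_inverse (mul a h) (mul h' a').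
Proof.
  destruct Ha as [A1 A2], Hh as [H1 H2]; split.
  - rewrite !mulA, (canc _ H1), A1. reflexivity.
  - rewrite !mulA, (canc _ A2), H2. reflexivity.
Qed.

Local Notation Q := (zpow (mul a h) (mul h' a')).

Lemma pow_ah z : Q z = mul (Dfun z) (P z).
Proof.
  induction z using Z.peano_ind.
  - cbn. rewrite mulx1. reflexivity.
  - rewrite <- Z.add_1_r, (zpow_succ Hah), IHz, D_succ, !mulA.
    rewrite (canc _ (zinvl Ha _)), (zpow_succ Ha), !mulA. reflexivity.
  - rewrite <- Z.sub_1_r, (zpow_pred Hah), IHz.
    pose proof (D_succ (z - 1)) as E. rewrite Z.sub_add in E. rewrite E.
    rewrite (zpow_pred Ha), !mulA. destruct Hh as [H1 _].
    rewrite (canc _ (zinvl Ha _)), (canc _ H1). reflexivity.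
Qed.

Lemma D_eq z : Dfun z = mul (Q z) (P (- z)).
Proof. rewrite pow_ah, <- mulA, (zinv Ha), mulx1. reflexivity. Qed.

Lemma cocycle m k : mul (Dfun m) (mul (mul (P m) (Dfun k)) (P (- m))) = Dfun (m + k).
Proof.
  rewrite !D_eq, !mulA, (canc _ (zinvl Ha _)).
  replace (- (m + k)) with (- k + - m) by lia.
  rewrite (zpow_add Ha (- k) (- m)), (zpow_add Hah), !mulA. reflexivity.
Qed.

Definition W (t t' : M) (i : nat) : M :=
  mul (b 0%nat) (oprod (fun j => mul (zpow t t' (n j)) (b j)) (seq 1 i)).

Lemma W_S t t' i : W t t' (S i) = mul (W t t' i) (mul (zpow t t' (n (S i))) (b (S i))).
Proof.
  unfold W. rewrite seq_S, oprod_app. simpl. rewrite mulx1, mulA. reflexivity.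
Qed.

Lemma fold_add x s : fold_right Z.add x s = fold_right Z.add 0 s + x.
Proof. induction s; simpl; lia. Qed.

Lemma K_S i : total_exp n (S i) = total_exp n i + n (S i).
Proof.
  unfold total_exp. rewrite seq_S, map_app, fold_right_app. simpl.
  rewrite fold_add. lia.
Qed.

Lemma shift i : (i <= l)%nat -> forall y, good y ->
  mul (W a a' i) y = mul (mul (mul (P (total_exp n i)) y) (P (- total_exp n i))) (W a a' i).
Proof.
  induction i; intros Hi y G.
  - unfold W. simpl. cbn [zpow]. rewrite !mulx1, mul1x.
    specialize (G 0 0%nat Hi). cbn [zpow Z.opp] in G. rewrite mul1x, !mulx1 in G. symmetry; exact G.
  - rewrite W_S, K_S.
    assert (Gb := G 0 (S i) Hi). cbn [zpow Z.opp] in Gb. rewrite mul1x, !mulx1 in Gb.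
    rewrite <- !mulA, <- Gb.
    set (y1 := mul (mul (P (n (S i))) y) (P (- n (S i)))).
    assert (E : mul (P (n (S i))) y = mul y1 (P (n (S i)))).
    { unfold y1. rewrite (canc _ (zinvl Ha _)). reflexivity. }
    rewrite (mulA _ (P (n (S i))) y), E, !mulA.
    rewrite (IHi ltac:(lia) y1 (good_conj _ _ G)).
    unfold y1. rewrite conjP, ?mulA. reflexivity.
Qed.

Lemma main i : (i <= l)%nat -> W (mul a h) (mul h' a') i = mul (Dfun (total_exp n i)) (W a a' i).
Proof.
  induction i; intros Hi.
  - simpl. unfold Dfun. simpl. rewrite mul1x. reflexivity.
  - rewrite !W_S, K_S, IHi by lia. rewrite pow_ah, <- cocycle.
    rewrite !mulA, <- (mulA _ _ (W a a' i) (Dfun _)), (shift i ltac:(lia) _ (good_D _)), !mulA.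
    reflexivity.
Qed.

End Main.

Theorem lemma1 (M : monoid) (l : nat) (b : nat -> M) (n : nat -> Z)
  (a a' h h' : M) (Ha : is_inverse a a') (Hh : is_inverse h h')
  (Hcomm : forall (s : Z) (i : nat), (i <= l)%nat ->
     mul (mul (mul (zpow a a' (- s)) h) (zpow a a' s)) (b i)
     = mul (b i) (mul (mul (zpow a a' (- s)) h) (zpow a a' s))) :
  let k := total_exp n l in
  word b n l (mul a h) (mul h' a') =
  (if (0 <? k)%Z then
     mul (oprod (fun j => mul (mul (zpow a a' (Z.of_nat j)) h) (zpow a a' (- Z.of_nat j)))
                (seq 1 (Z.to_nat k)))
         (word b n l a a')
   else if (k <? 0)%Z then
     mul (oprod (fun j => mul (mul (zpow a a' (- Z.of_nat j)) h') (zpow a a' (Z.of_nat j)))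
                (seq 0 (Z.to_nat (- k))))
         (word b n l a a')
   else word b n l a a').
Proof.
  intros k.
  pose proof (main M l b n a a' h h' Ha Hh Hcomm l (le_n l)) as E.
  unfold W in E. unfold word. rewrite E. unfold Dfun. fold k.
  destruct (0 <? k); [|destruct (k <? 0)]; try reflexivity.
  apply mul1x.
Qed.
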